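(* Let $n\ge2$, $m\ge1$, $\lambda_0\ne0$, $\lambda_1>0$, $\lambda_2\ge0$, $\omega\in\mathbb{R}$, let $f=\frac1n\sum_{i=1}^n r_i(\cdot;\lambda_0,\lambda_1,\lambda_2,m,\omega)$, and assume $f$ attains its minimum $f^*$ on $\mathbb{R}^m$. Consider a PIFO algorithm with initial point $x_0=0$ and sampling probabilities satisfying $p_1\le p_2\le\dots\le p_n$, run on the components $f_i=r_i(\cdot;\lambda_0,\lambda_1,\lambda_2,m,\omega)$. Let $\varepsilon>0$ and let $M\ge1$ be an integer such that $\min_{x\in\mathcal{F}_M}f(x)-f^*\ge9\varepsilon$, and set $N=n(M+1)/4$. Then $\mathbb{E} f(x_t)-f^*\ge\varepsilon$ for every integer $0\le t\le N$.
   Context: For $\omega\in\mathbb{R}$, $B(m,\omega)\in\mathbb{R}^{m\times m}$ is the matrix whose row $l$, for $1\le l\le m-1$, has entry $-1$ in column $m-l$ and entry $1$ in column $m-l+1$, and whose row $m$ is $\omega e_1^\top$; $b_l(m,\omega)^\top$ is its $l$-th row. $\mathcal{L}_i=\{l:1\le l\le m,\ l\equiv i-1\pmod n\}$. $r_1(x)=\lambda_1\sum_{l\in\mathcal{L}_1}(b_l(m,\omega)^\top x)^2+\lambda_2\|x\|_2^2-\lambda_0\langle e_m,x\rangle$ and $r_i(x)=\lambda_1\sum_{l\in\mathcal{L}_i}(b_l(m,\omega)^\top x)^2+\lambda_2\|x\|_2^2$ for $i\ge2$, $x\in\mathbb{R}^m$. $\mathcal{F}_0=\{0\}$, $\mathcal{F}_k=\mathrm{span}\{e_m,\dots,e_{m-k+1}\}$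 for $1\le k\le m$. For $\gamma>0$, $\mathrm{prox}^{\gamma}_g(x)=\arg\min_u\{g(u)+\frac{1}{2\gamma}\|x-u\|_2^2\}$. PIFO algorithm: a probability vector $(p_1,\dots,p_n)$, initial point $x_0$, parameters $\gamma_t>0$; indices $i_1,i_2,\dots$ drawn independently with $\mathbb{P}(i_t=j)=p_j$; iterates $x_t\in\mathrm{span}\{x_0,\dots,x_{t-1},\nabla f_{i_1}(x_0),\dots,\nabla f_{i_t}(x_{t-1}),\mathrm{prox}^{\gamma_1}_{f_{i_1}}(x_0),\dots,\mathrm{prox}^{\gamma_t}_{f_{i_t}}(x_{t-1})\}$ for $t\ge1$. *)

(* Defs.v *)
From Stdlib Require Import Reals Lra Lia List Arith Bool.
Import ListNotations.
Open Scope R_scope.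

(* Vectors of R^m are functions nat -> R, using coordinates 1..m
   (values at other indices are irrelevant). *)
Definition vec := nat -> R.

Definition zero_vec : vec := fun _ => 0.

Fixpoint sumR (n : nat) (F : nat -> R) : R :=
  match n with
  | O => 0
  | S k => sumR k F + F k
  end.

Definition sum1 (n : nat) (F : nat -> R) : R := sumR n (fun k => F (S k)).

Definition norm2 (m : nat) (x : vec) : R := sum1 m (fun c => x c ^ 2).

Definition vsub (x y : vec) : vec := fun c => x c - y c.

(* Entry (l, c) of B(m, omega), 1-based. *)
Definition Bentry (m : nat) (omega : R) (l c : nat) : R :=
  if andb (1 <=? l)%nat (l <=? m - 1)%nat then
    (if (c =? m - l)%nat then -1 else if (c =? m - l + 1)%nat then 1 else 0)
  else if (l =? m)%nat then (if (c =? 1)%nat then omega else 0)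
  else 0.

Definition bdot (m : nat) (omega : R) (l : nat) (x : vec) : R :=
  sum1 m (fun c => Bentry m omega l c * x c).

Definition inL (n i l : nat) : bool := (l mod n =? (i - 1) mod n)%nat.

Definition r_comp (n m : nat) (l0 l1 l2 omega : R) (i : nat) (x : vec) : R :=
  l1 * sum1 m (fun l => if inL n i l then (bdot m omega l x) ^ 2 else 0)
  + l2 * norm2 m x
  - (if (i =? 1)%nat then l0 * x m else 0).

Definition f_avg (n m : nat) (l0 l1 l2 omega : R) (x : vec) : R :=
  / INR n * sum1 n (fun i => r_comp n m l0 l1 l2 omega i x).

(* F_k = span{e_m, ..., e_{m-k+1}}: coordinates c <= m-k vanish. *)
Definition in_F (m k : nat) (x : vec) : Prop :=
  forall c, (1 <= c)%nat -> (c <= m - k)%nat -> x c = 0.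

Definition is_grad (m : nat) (g : vec -> R) (x v : vec) : Prop :=
  forall c, (1 <= c <= m)%nat ->
    derivable_pt_lim (fun h => g (fun d => if (d =? c)%nat then x d + h else x d)) 0 (v c).

Definition is_prox (m : nat) (g : vec -> R) (gamma : R) (x u : vec) : Prop :=
  forall v, g u + norm2 m (vsub x u) / (2 * gamma)
            <= g v + norm2 m (vsub x v) / (2 * gamma).

Definition in_span (m : nat) (vs : list vec) (x : vec) : Prop :=
  exists coef : nat -> R, forall c, (1 <= c <= m)%nat ->
    x c = sumR (length vs) (fun k => coef k * nth k vs zero_vec c).

(* An algorithm is given by X : list nat -> vec, where X [i_1; ...; i_t] = x_t.
   PIFO span condition along every index sequence with entries in 1..n. *)
Definition valid_seq (n : nat) (s : list nat) : Prop :=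
  forall j, In j s -> (1 <= j <= n)%nat.

Definition PIFO (n m : nat) (comp : nat -> vec -> R) (gamma : nat -> R)
    (X : list nat -> vec) : Prop :=
  forall s : list nat, valid_seq n s -> (1 <= length s)%nat ->
    let t := length s in
    exists gs us : nat -> vec,
      (forall k, (k < t)%nat ->
         is_grad m (comp (nth k s O)) (X (firstn k s)) (gs k) /\
         is_prox m (comp (nth k s O)) (gamma (S k)) (X (firstn k s)) (us k)) /\
      in_span m (map (fun k => X (firstn k s)) (seq 0 t)
                 ++ map gs (seq 0 t) ++ map us (seq 0 t)) (X s).

(* E[F(i_1,...,i_t)] for i.i.d. indices with P(i = j) = p j, j in 1..n *)
Fixpoint expectation (n : nat) (p : nat -> R) (t : nat) (F : list nat -> R) : R :=
  match t with
  | O => F []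
  | S t' => sum1 n (fun j => p j * expectation n p t' (fun s => F (j :: s)))
  end.

(* Main.v *)
Require Import Defs.
From Stdlib Require Import Reals Lra Lia List Arith Bool.
Import ListNotations.
Open Scope R_scope.

Lemma sumR_ext n F G : (forall k, (k < n)%nat -> F k = G k) -> sumR n F = sumR n G.
Proof. induction n; simpl; intros H; auto. rewrite IHn by (intros; apply H; lia). rewrite H by lia. auto. Qed.

Lemma sumR_le n F G : (forall k, (k < n)%nat -> F k <= G k) -> sumR n F <= sumR n G.
Proof. induction n; simpl; intros H; [lra|]. pose proof (IHn (fun k h => H k ltac:(lia))). pose proof (H n ltac:(lia)). lra. Qed.

Lemma sumR_plus n F G : sumR n (fun k => F k + G k) = sumR n F + sumR n G.
Proof. induction n; simpl; [lra|]. rewrite IHn. lra. Qed.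

Lemma sumR_scal n c F : sumR n (fun k => c * F k) = c * sumR n F.
Proof. induction n; simpl; [lra|]. rewrite IHn. lra. Qed.

Lemma sumR_const n c : sumR n (fun _ => c) = INR n * c.
Proof. induction n; simpl sumR; [simpl; lra|]. rewrite IHn, S_INR. lra. Qed.

Lemma sumR_add a b F : sumR (a + b) F = sumR a F + sumR b (fun j => F (a + j)%nat).
Proof. induction b; simpl. rewrite Nat.add_0_r; lra. rewrite Nat.add_succ_r; simpl. rewrite IHb. lra. Qed.

Lemma sumR_ge_term n F k : (forall j, (j < n)%nat -> 0 <= F j) -> (k < n)%nat -> F k <= sumR n F.
Proof.
  induction n; intros H Hk; [lia|]. simpl.
  assert (0 <= sumR n F). { clear IHn Hk. assert (sumR n (fun _ => 0) <= sumR n F) by (apply sumR_le; intros; apply H; lia).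
    rewrite sumR_const in H0. lra. }
  destruct (Nat.eq_dec k n). subst; lra.
  pose proof (IHn (fun j h => H j ltac:(lia)) ltac:(lia)). pose proof (H n ltac:(lia)). lra.
Qed.

Lemma sumR_zero n F : (forall k, (k < n)%nat -> F k = 0) -> sumR n F = 0.
Proof. intros H. rewrite (sumR_ext n F (fun _ => 0)) by auto. rewrite sumR_const; lra. Qed.

Lemma sumR_delta n c F : (c < n)%nat -> sumR n (fun k => if (k =? c)%nat then F k else 0) = F c.
Proof.
  induction n; intros H; [lia|]. simpl. destruct (Nat.eq_dec c n).
  - subst. rewrite Nat.eqb_refl. rewrite sumR_zero. lra. intros k Hk. destruct (Nat.eqb_spec k n); [lia|auto].
  - rewrite IHn by lia. destruct (Nat.eqb_spec n c); [lia|lra].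
Qed.

Lemma sum1_ext n F G : (forall k, (1 <= k <= n)%nat -> F k = G k) -> sum1 n F = sum1 n G.
Proof. intros H; unfold sum1; apply sumR_ext; intros; apply H; lia. Qed.

Lemma sum1_le n F G : (forall k, (1 <= k <= n)%nat -> F k <= G k) -> sum1 n F <= sum1 n G.
Proof. intros H; unfold sum1; apply sumR_le; intros; apply H; lia. Qed.

Lemma sum1_plus n F G : sum1 n (fun k => F k + G k) = sum1 n F + sum1 n G.
Proof. apply sumR_plus. Qed.

Lemma sum1_scal n c F : sum1 n (fun k => c * F k) = c * sum1 n F.
Proof. apply sumR_scal. Qed.

Definition zj (j : nat) (y : vec) : vec := fun d => if (d <=? j)%nat then 0 else y d.

Ltac bsplit :=
  repeat match goal with
  | |- context [if ?b then _ else _] => let E := fresh "E" in destruct b eqn:E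
  end;
  repeat match goal with
  | H : (_ <=? _)%nat = true |- _ => apply Nat.leb_le in H
  | H : (_ <=? _)%nat = false |- _ => apply Nat.leb_gt in H
  | H : (_ =? _)%nat = true |- _ => apply Nat.eqb_eq in H
  | H : (_ =? _)%nat = false |- _ => apply Nat.eqb_neq in H
  | H : (_ && _)%bool = true |- _ => apply andb_true_iff in H; destruct H
  | H : (_ && _)%bool = false |- _ => apply andb_false_iff in H; destruct H
  end.

Lemma Bentry_zj m omega j l c y : (1 <= j)%nat -> (1 <= l <= m)%nat -> l <> (m - j)%nat ->
  Bentry m omega l c * zj j y c = (if (m - l + 1 <=? j)%nat then 0 else 1) * (Bentry m omega l c * y c).
Proof. intros Hj Hl Hlj. unfold Bentry, zj. bsplit; first [ring | (exfalso; lia)]. Qed.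

Lemma bdot_zj m omega j l y : (1 <= j)%nat -> (1 <= l <= m)%nat -> l <> (m - j)%nat ->
  bdot m omega l (zj j y) = (if (m - l + 1 <=? j)%nat then 0 else 1) * bdot m omega l y.
Proof. intros. unfold bdot. rewrite <- sum1_scal. apply sum1_ext. intros; apply Bentry_zj; auto. Qed.

Lemma r_comp_ext n m l0 l1 l2 omega i x y : (1 <= m)%nat ->
  (forall d, (1 <= d <= m)%nat -> x d = y d) ->
  r_comp n m l0 l1 l2 omega i x = r_comp n m l0 l1 l2 omega i y.
Proof.
  intros Hm H. unfold r_comp, norm2.
  rewrite (sum1_ext m (fun l => if inL n i l then bdot m omega l x ^ 2 else 0)
                      (fun l => if inL n i l then bdot m omega l y ^ 2 else 0)).
  rewrite (sum1_ext m (fun c => x c ^ 2) (fun c => y c ^ 2)).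
  rewrite (H m) by lia. reflexivity.
  intros; rewrite H; auto.
  intros. unfold bdot. rewrite (sum1_ext m (fun c => Bentry m omega k c * x c) (fun c => Bentry m omega k c * y c)); auto.
  intros; rewrite H; auto.
Qed.

Lemma inL_1_0 n : inL n 1 0 = true.
Proof. unfold inL. simpl. apply Nat.eqb_refl. Qed.

Lemma r_comp_zj n m l0 l1 l2 omega i j y : (1 <= j <= m)%nat -> 0 < l1 -> 0 <= l2 ->
  inL n i (m - j) = false ->
  r_comp n m l0 l1 l2 omega i (zj j y) <= r_comp n m l0 l1 l2 omega i y.
Proof.
  intros Hj Hl1 Hl2 Hi. unfold r_comp, norm2.
  assert (A : sum1 m (fun l => if inL n i l then bdot m omega l (zj j y) ^ 2 else 0)
           <= sum1 m (fun l => if inL n i l then bdot m omega l y ^ 2 else 0)).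
  { apply sum1_le. intros l Hl. destruct (inL n i l) eqn:El; [|lra].
    rewrite bdot_zj by (try lia; intro; subst; congruence).
    destruct (m - l + 1 <=? j)%nat; nra. }
  assert (B : sum1 m (fun c => zj j y c ^ 2) <= sum1 m (fun c => y c ^ 2)).
  { apply sum1_le. intros c Hc. unfold zj. destruct (c <=? j)%nat; nra. }
  assert (C : (if (i =? 1)%nat then l0 * zj j y m else 0) = (if (i =? 1)%nat then l0 * y m else 0)).
  { destruct (Nat.eqb_spec i 1); auto. subst. unfold zj. destruct (Nat.leb_spec m j); auto.
    replace (m - j)%nat with 0%nat in Hi by lia. rewrite inL_1_0 in Hi. discriminate. }
  rewrite C. nra.
Qed.

Lemma grad_zero n m l0 l1 l2 omega i j x v : (1 <= m)%nat -> (1 <= j <= m)%nat -> 0 < l1 -> 0 <= l2 ->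
  inL n i (m - j) = false ->
  (forall d, (1 <= d <= j)%nat -> x d = 0) ->
  is_grad m (r_comp n m l0 l1 l2 omega i) x v ->
  forall c, (1 <= c <= j)%nat -> v c = 0.
Proof.
  intros Hm Hj Hl1 Hl2 Hi Hx Hg c Hc.
  specialize (Hg c ltac:(lia)).
  set (G := fun h => r_comp n m l0 l1 l2 omega i (fun d => if (d =? c)%nat then x d + h else x d)) in *.
  assert (pr : derivable_pt G 0) by (exists (v c); exact Hg).
  rewrite <- (derive_pt_eq_0 G 0 (v c) pr Hg).
  apply (deriv_minimum G (-1) 1 0 pr); try lra.
  intros h _ _. unfold G.
  eapply Rle_trans; [|apply (r_comp_zj n m l0 l1 l2 omega i j _ Hj Hl1 Hl2 Hi)].
  right. apply r_comp_ext; auto. intros d Hd. unfold zj.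
  destruct (Nat.leb_spec d j); destruct (Nat.eqb_spec d c); try lia;
  try (rewrite Hx by lia; lra); try (subst; lia); auto.
Qed.

Lemma prox_zero n m l0 l1 l2 omega i j x u gam : (1 <= m)%nat -> (1 <= j <= m)%nat -> 0 < l1 -> 0 <= l2 ->
  0 < gam -> inL n i (m - j) = false ->
  (forall d, (1 <= d <= j)%nat -> x d = 0) ->
  is_prox m (r_comp n m l0 l1 l2 omega i) gam x u ->
  forall c, (1 <= c <= j)%nat -> u c = 0.
Proof.
  intros Hm Hj Hl1 Hl2 Hgam Hi Hx Hp c Hc.
  specialize (Hp (zj j u)).
  pose proof (r_comp_zj n m l0 l1 l2 omega i j u Hj Hl1 Hl2 Hi).
  set (SS := sum1 m (fun c => if (c <=? j)%nat then u c ^ 2 else 0)).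
  assert (E : norm2 m (vsub x (zj j u)) + SS = norm2 m (vsub x u)).
  { unfold norm2, SS. rewrite <- sum1_plus. apply sum1_ext. intros d Hd.
    unfold vsub, zj. destruct (Nat.leb_spec d j). rewrite Hx by lia. ring. ring. }
  assert (HS : SS <= 0).
  { assert (SS / (2 * gam) <= 0).
    { unfold Rdiv in *. rewrite <- E in Hp. rewrite Rmult_plus_distr_r in Hp. lra. }
    assert (0 < / (2*gam)) by (apply Rinv_0_lt_compat; lra).
    unfold Rdiv in H0. nra. }
  assert (T : (if (c <=? j)%nat then u c ^ 2 else 0) <= SS).
  { unfold SS, sum1. pose proof (sumR_ge_term m (fun k => if (S k <=? j)%nat then u (S k) ^ 2 else 0) (c - 1)) as T'. cbv beta in T'.
    replace (S (c-1)) with c in T' by lia. apply T'.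
    intros j0 _; destruct (S j0 <=? j)%nat; [apply pow2_ge_0|lra]. lia. }
  destruct (Nat.leb_spec c j); [|lia].
  nra.
Qed.

Definition stepK (n i k : nat) : nat := (k + if inL n i k then 1 else 0)%nat.
Fixpoint Kf (n k : nat) (s : list nat) : nat :=
  match s with [] => k | i :: s' => Kf n (stepK n i k) s' end.

Lemma Kf_app n k l1 l2 : Kf n k (l1 ++ l2) = Kf n (Kf n k l1) l2.
Proof. revert k; induction l1; simpl; auto. Qed.

Lemma Kf_ge n k s : (k <= Kf n k s)%nat.
Proof. revert k; induction s; simpl; intros; auto. specialize (IHs (stepK n a k)). unfold stepK in *. lia. Qed.

Lemma firstn_S_nth (s : list nat) k : (k < length s)%nat -> firstn (S k) s = firstn k s ++ [nth k s O].
Proof. revert k; induction s; simpl; intros k H; [lia|]. destruct k; simpl; auto. f_equal. apply IHs; lia. Qed.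

Lemma inL_next n i k : (2 <= n)%nat -> inL n i k = true -> inL n i (S k) = false.
Proof.
  intros Hn H. unfold inL in *. apply Nat.eqb_eq in H. apply Nat.eqb_neq. rewrite <- H.
  pose proof (Nat.mod_upper_bound k n ltac:(lia)).
  replace (S k) with (k + 1)%nat by lia. rewrite Nat.add_mod by lia.
  rewrite (Nat.mod_small 1 n) by lia.
  destruct (Nat.eq_dec (k mod n + 1) n) as [E|E].
  - rewrite E, Nat.mod_same by lia. lia.
  - rewrite Nat.mod_small by lia. lia.
Qed.

Section Inv.
Variables (n m : nat) (l0 l1 l2 omega : R).
Hypotheses (Hn : (2 <= n)%nat) (Hm : (1 <= m)%nat) (Hl1 : 0 < l1) (Hl2 : 0 <= l2).

Lemma step_zero i K x g u gam : 0 < gam ->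
  (forall d, (1 <= d <= m - K)%nat -> x d = 0) ->
  is_grad m (r_comp n m l0 l1 l2 omega i) x g ->
  is_prox m (r_comp n m l0 l1 l2 omega i) gam x u ->
  forall d, (1 <= d <= m - stepK n i K)%nat -> g d = 0 /\ u d = 0.
Proof.
  intros Hg Hx Hgr Hpr d Hd.
  set (j := (m - stepK n i K)%nat) in *.
  assert (Hi : inL n i (m - j) = false).
  { unfold j. replace (m - (m - stepK n i K))%nat with (stepK n i K) by lia.
    unfold stepK. destruct (inL n i K) eqn:E.
    - replace (K+1)%nat with (S K) by lia. apply inL_next; auto.
    - rewrite Nat.add_0_r. auto. }
  assert (Hx' : forall d, (1 <= d <= j)%nat -> x d = 0).
  { intros; apply Hx. unfold j, stepK in *. lia. }
  split.
  - apply (grad_zero n m l0 l1 l2 omega i j x g); auto; lia.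
  - apply (prox_zero n m l0 l1 l2 omega i j x u gam); auto; lia.
Qed.

Variables (gamma : nat -> R) (X : list nat -> vec).
Hypotheses (Hgamma : forall t, (1 <= t)%nat -> 0 < gamma t)
  (HX0 : forall c, X [] c = 0)
  (HX : PIFO n m (r_comp n m l0 l1 l2 omega) gamma X).

Lemma span_zero (L : list vec) coef c :
  (forall v, In v L -> v c = 0) ->
  sumR (length L) (fun k => coef k * nth k L zero_vec c) = 0.
Proof.
  intros H. apply sumR_zero. intros k Hk. rewrite H. ring. apply nth_In; auto.
Qed.


Lemma invariant : forall t s, length s = t -> valid_seq n s ->
  forall d, (1 <= d <= m - Kf n 0 s)%nat -> X s d = 0.
Proof.
  induction t as [t IH] using lt_wf_ind.
  intros s Hlen Hv d Hd.
  destruct t as [|t'].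
  { destruct s; [|simpl in Hlen; lia]. apply HX0. }
  destruct (HX s Hv ltac:(lia)) as (gs & us & Hgu & Hspan).
  assert (Hpre : forall k, (k <= length s)%nat -> valid_seq n (firstn k s)).
  { intros k _ j Hj. apply Hv. rewrite <- (firstn_skipn k s). apply in_or_app; auto. }
  assert (Kle : forall k, (Kf n 0 (firstn k s) <= Kf n 0 s)%nat).
  { intros k. rewrite <- (firstn_skipn k s) at 2. rewrite Kf_app. apply Kf_ge. }
  assert (Hxk : forall k, (k < length s)%nat -> X (firstn k s) d = 0).
  { intros k Hk. apply (IH k ltac:(lia) (firstn k s)).
    apply firstn_length_le; lia. apply Hpre; lia.
    pose proof (Kle k). lia. }
  assert (Hgk : forall k, (k < length s)%nat -> gs k d = 0 /\ us k d = 0).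
  { intros k Hk. destruct (Hgu k Hk) as [Hg Hp].
    apply (step_zero (nth k s O) (Kf n 0 (firstn k s)) (X (firstn k s)) (gs k) (us k) (gamma (S k))); auto.
    apply Hgamma; lia.
    intros d' Hd'. apply (IH k ltac:(lia) (firstn k s)); auto.
    apply firstn_length_le; lia. apply Hpre; lia.
    pose proof (Kle (S k)) as H. rewrite firstn_S_nth in H by lia. rewrite Kf_app in H. simpl in H. lia. }
  destruct Hspan as [coef Hc]. rewrite Hc by lia.
  apply span_zero. intros v Hin.
  apply in_app_or in Hin as [Hin|Hin]; [|apply in_app_or in Hin as [Hin|Hin]];
  apply in_map_iff in Hin as (k & <- & Hk); apply in_seq in Hk.
  - apply Hxk; lia.
  - apply Hgk; lia.
  - apply Hgk; lia.
Qed.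
End Inv.

Section Prob.
Variables (n : nat) (p : nat -> R).
Hypotheses (Hn : (2 <= n)%nat)
  (Hp_nonneg : forall j, (1 <= j <= n)%nat -> 0 <= p j)
  (Hp_sum : sum1 n p = 1)
  (Hp_mono : forall j, (1 <= j)%nat -> (j < n)%nat -> p j <= p (S j)).

Lemma p_mono_gen : forall d i, (1 <= i)%nat -> (i + d <= n)%nat -> p i <= p (i + d)%nat.
Proof.
  induction d; intros i Hi Hd. rewrite Nat.add_0_r; lra.
  eapply Rle_trans. apply (IHd i); lia. replace (i + S d)%nat with (S (i + d)) by lia. apply Hp_mono; lia.
Qed.

Lemma INRn_pos : 0 < INR n.
Proof. apply lt_0_INR. lia. Qed.

Lemma prefix_bound b : (b <= n)%nat -> INR n * sum1 b p <= INR b.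
Proof.
  intros Hb. destruct b as [|b'].
  { unfold sum1; simpl. lra. }
  set (b := S b') in *.
  assert (A : sum1 b p <= INR b * p b).
  { unfold sum1. rewrite <- sumR_const. apply sumR_le. intros k Hk.
    pose proof (p_mono_gen (b - S k) (S k)) as T. replace (S k + (b - S k))%nat with b in T by lia.
    apply T; unfold b in *; lia. }
  assert (B : sum1 n p = sum1 b p + sumR (n - b) (fun j => p (S (b + j)))).
  { unfold sum1. replace n with (b + (n - b))%nat at 1 by lia. rewrite sumR_add. reflexivity. }
  assert (C : INR (n - b) * p b <= sumR (n - b) (fun j => p (S (b + j)))).
  { rewrite <- sumR_const. apply sumR_le. intros k Hk.
    replace (S (b + k)) with (b + S k)%nat by lia. apply p_mono_gen; unfold b; lia. }
  rewrite minus_INR in C by lia.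
  assert (0 <= INR b) by apply pos_INR.
  assert (INR b <= INR n) by (apply le_INR; lia).
  assert (0 <= (INR n - INR b) * (INR b * p b - sum1 b p)) by (apply Rmult_le_pos; lra).
  assert (0 <= INR b * (sumR (n - b) (fun j => p (S (b + j))) - (INR n - INR b) * p b)) by (apply Rmult_le_pos; lra).
  nra.
Qed.

Definition q (j : nat) : R := p (j mod n + 1).

Lemma q_nonneg j : 0 <= q j.
Proof. unfold q. apply Hp_nonneg. pose proof (Nat.mod_upper_bound j n ltac:(lia)). lia. Qed.

Lemma q_sum : forall k, INR n * sumR k q <= INR k.
Proof.
  induction k as [k IH] using lt_wf_ind.
  destruct (Nat.lt_ge_cases k n).
  - rewrite (sumR_ext k q (fun j => p (S j))). apply prefix_bound; lia.
    intros j Hj. unfold q. rewrite Nat.mod_small by lia. f_equal; lia.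
  - replace k with (n + (k - n))%nat at 1 by lia. rewrite sumR_add.
    rewrite (sumR_ext n q (fun j => p (S j))).
    2:{ intros j Hj. unfold q. rewrite Nat.mod_small by lia. f_equal; lia. }
    rewrite (sumR_ext (k - n) (fun j => q (n + j)%nat) q).
    2:{ intros j Hj. unfold q. f_equal. f_equal. replace (n + j)%nat with (j + 1 * n)%nat by lia.
        apply Nat.Div0.mod_add. }
    fold (sum1 n p). rewrite Hp_sum.
    pose proof (IH (k - n)%nat ltac:(lia)). rewrite minus_INR in H0 by lia. nra.
Qed.

Definition w (j : nat) : R := / (q j + / INR n).
Definition Phi (k : nat) : R := sumR k w.

Lemma w_lb j : 3 * INR n / 4 - INR n * INR n / 4 * q j <= w j.
Proof.
  unfold w. pose proof INRn_pos. pose proof (q_nonneg j).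
  set (N := INR n) in *. set (a := q j + / N).
  assert (Ha : 0 < a) by (unfold a; pose proof (Rinv_0_lt_compat N H); lra).
  assert (E1 : N * / N = 1) by (field; lra).
  assert (E2 : a * / a = 1) by (field; lra).
  replace (q j) with (a - / N) by (unfold a; ring).
  apply (Rmult_le_reg_l a); auto.
  rewrite E2.
  assert (0 <= (1 - a * N / 2) ^ 2) by apply pow2_ge_0.
  clearbody a N. set (iN := / N) in *. clearbody iN.
  assert (a * (3 * N / 4 - N * N / 4 * (a - iN)) = a * N - a * a * N * N / 4 + a * (N * iN) * N / 4 - a * N / 4) by field.
  rewrite E1 in H2. nra.
Qed.

Lemma w_q j : q j * w j <= 1.
Proof.
  unfold w. pose proof INRn_pos. pose proof (q_nonneg j).
  pose proof (Rinv_0_lt_compat _ H).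
  assert (Ha : 0 < q j + / INR n) by lra.
  apply (Rmult_le_reg_l (q j + / INR n)); auto.
  rewrite (Rmult_comm (q j)), <- Rmult_assoc, Rinv_r by lra. lra.
Qed.

Lemma w_pos j : 0 < w j.
Proof. unfold w. apply Rinv_0_lt_compat. pose proof INRn_pos. pose proof (q_nonneg j). pose proof (Rinv_0_lt_compat _ H). lra. Qed.

Lemma Phi_lb k : INR k * INR n / 2 <= Phi k.
Proof.
  unfold Phi. eapply Rle_trans.
  2:{ apply sumR_le. intros j _. apply w_lb. }
  rewrite (sumR_ext k _ (fun k0 => 3 * INR n / 4 + (- (INR n / 4)) * (INR n * q k0))) by (intros; unfold Rdiv; ring).
  rewrite sumR_plus, sumR_const, sumR_scal, sumR_scal.
  pose proof (q_sum k). pose proof INRn_pos. nra.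
Qed.

Lemma inL_eq j k : (1 <= j <= n)%nat -> inL n j k = (j =? k mod n + 1)%nat.
Proof.
  intros Hj. unfold inL. rewrite (Nat.mod_small (j - 1)) by lia.
  destruct (Nat.eqb_spec (k mod n) (j - 1)); destruct (Nat.eqb_spec j (k mod n + 1)); auto; lia.
Qed.

Lemma sum1_delta c : (1 <= c <= n)%nat -> sum1 n (fun j => if (j =? c)%nat then p j else 0) = p c.
Proof.
  intros Hc. unfold sum1.
  rewrite (sumR_ext n _ (fun k => if (k =? c - 1)%nat then p (S k) else 0)).
  rewrite sumR_delta by lia. f_equal; lia.
  intros k Hk. destruct (Nat.eqb_spec (S k) c); destruct (Nat.eqb_spec k (c - 1)); auto; lia.
Qed.

Lemma E_Phi : forall t k0, expectation n p t (fun s => Phi (Kf n k0 s)) <= Phi k0 + INR t.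
Proof.
  induction t; intros k0. simpl. lra.
  simpl expectation. cbn [Kf].
  eapply Rle_trans.
  { apply sum1_le. intros j Hj. apply Rmult_le_compat_l. apply Hp_nonneg; auto.
    apply (IHt (stepK n j k0)). }
  rewrite (sum1_ext n _ (fun j => (Phi k0 + INR t) * p j + w k0 * (if (j =? k0 mod n + 1)%nat then p j else 0))).
  2:{ intros j Hj. unfold stepK. rewrite inL_eq by auto.
      destruct (Nat.eqb_spec j (k0 mod n + 1)).
      - replace (k0 + 1)%nat with (S k0) by lia. unfold Phi; simpl sumR. ring.
      - rewrite Nat.add_0_r. ring. }
  rewrite sum1_plus, sum1_scal, sum1_scal, Hp_sum, sum1_delta.
  2:{ pose proof (Nat.mod_upper_bound k0 n ltac:(lia)). lia. }
  pose proof (w_q k0). unfold q in H. rewrite S_INR. lra.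
Qed.

Lemma E_mono : forall t F G, (forall s, valid_seq n s -> F s <= G s) ->
  expectation n p t F <= expectation n p t G.
Proof.
  induction t; intros F G H; simpl.
  - apply H. intros j [].
  - apply sum1_le. intros j Hj. apply Rmult_le_compat_l. apply Hp_nonneg; auto.
    apply IHt. intros s Hs. apply H. intros i [<-|Hi]; auto.
Qed.

Lemma E_affine : forall t a b F, expectation n p t (fun s => a + b * F s) = a + b * expectation n p t F.
Proof.
  induction t; intros a b F; simpl; auto.
  rewrite (sum1_ext n _ (fun j => a * p j + b * (p j * expectation n p t (fun s => F (j :: s))))).
  rewrite sum1_plus, sum1_scal, sum1_scal, Hp_sum. ring.
  intros j Hj. rewrite (IHt a b (fun s => F (j :: s))). ring.
Qed.

End Prob.

Theorem lemma2p5 (n m : nat) (l0 l1 l2 omega : R)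
  (Hn : (2 <= n)%nat) (Hm : (1 <= m)%nat)
  (Hl0 : l0 <> 0) (Hl1 : 0 < l1) (Hl2 : 0 <= l2)
  (fstar : R)
  (Hmin : (exists xs : vec, f_avg n m l0 l1 l2 omega xs = fstar) /\
          (forall x : vec, fstar <= f_avg n m l0 l1 l2 omega x))
  (p : nat -> R)
  (Hp_nonneg : forall j, (1 <= j <= n)%nat -> 0 <= p j)
  (Hp_sum : sum1 n p = 1)
  (Hp_mono : forall j, (1 <= j)%nat -> (j < n)%nat -> p j <= p (S j))
  (gamma : nat -> R) (Hgamma : forall t, (1 <= t)%nat -> 0 < gamma t)
  (X : list nat -> vec)
  (HX0 : forall c, X [] c = 0)
  (HX : PIFO n m (r_comp n m l0 l1 l2 omega) gamma X)
  (eps : R) (Heps : 0 < eps) (M : nat) (HM : (1 <= M)%nat)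
  (HFM : forall x : vec, in_F m M x -> f_avg n m l0 l1 l2 omega x - fstar >= 9 * eps) :
  forall t : nat, INR t <= INR n * INR (M + 1) / 4 ->
    expectation n p t (fun s => f_avg n m l0 l1 l2 omega (X s)) - fstar >= eps.
Proof.
  intros t Ht.
  set (I := fun s : list nat => if (M + 1 <=? Kf n 0 s)%nat then 1 else 0).
  assert (Hlow : forall s, valid_seq n s ->
            (fstar + 9 * eps) + (- (9 * eps)) * I s <= f_avg n m l0 l1 l2 omega (X s)).
  { intros s Hs. unfold I. destruct (Nat.leb_spec (M + 1) (Kf n 0 s)).
    - destruct Hmin as [_ Hm2]. specialize (Hm2 (X s)). lra.
    - assert (HF : in_F m M (X s)).
      { intros c Hc1 Hc2. apply (invariant n m l0 l1 l2 omega Hn Hm Hl1 Hl2 gamma X Hgamma HX0 HX (length s) s); auto. lia. }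
      specialize (HFM _ HF). lra. }
  pose proof (E_mono n p Hp_nonneg t _ _ Hlow) as E1.
  rewrite E_affine in E1 by auto.
  assert (Hphi : forall s, valid_seq n s -> 0 + Phi n p (M + 1) * I s <= Phi n p (Kf n 0 s)).
  { intros s _. unfold I. destruct (Nat.leb_spec (M + 1) (Kf n 0 s)).
    - rewrite Rplus_0_l, Rmult_1_r. unfold Phi. 
      replace (Kf n 0 s) with ((M + 1) + (Kf n 0 s - (M + 1)))%nat by lia.
      rewrite (sumR_add (M + 1)).
      assert (0 <= sumR (Kf n 0 s - (M + 1)) (fun j => w n p (M + 1 + j))).
      { rewrite <- (Rmult_0_r (INR (Kf n 0 s - (M + 1)))), <- sumR_const. apply sumR_le.
        intros; left; apply w_pos; auto. }
      lra.
    - rewrite Rmult_0_r, Rplus_0_l. unfold Phi.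
      rewrite <- (Rmult_0_r (INR (Kf n 0 s))), <- sumR_const. apply sumR_le.
      intros; left; apply w_pos; auto. }
  pose proof (E_mono n p Hp_nonneg t _ _ Hphi) as E2.
  rewrite E_affine in E2 by auto.
  pose proof (E_Phi n p Hn Hp_nonneg Hp_sum t 0) as E3.
  unfold Phi at 2 in E3. simpl sumR in E3.
  pose proof (Phi_lb n p Hn Hp_nonneg Hp_sum Hp_mono (M + 1)) as E4.
  pose proof (INRn_pos n Hn).
  assert (0 < INR (M + 1)) by (apply lt_0_INR; lia).
  set (EI := expectation n p t I) in *.
  set (Ph := Phi n p (M + 1)) in *.
  assert (Ph * EI <= Ph / 2) by nra.
  assert (EI <= 1 / 2).
  { assert (0 < Ph) by nra. apply (Rmult_le_reg_l Ph); auto. lra. }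
  nra.
Qed.
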